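(* Let $D\ge1$, let $X=\{0,1\}^D$, and let $Q_D$ be the $D$-dimensional hypercube on $X$. For a real matrix $B$ with rows and columns indexed by $X$, the following are equivalent: (i) $B_{xy}=0$ for all $x,y\in X$ that are neither equal nor adjacent in $Q_D$; (ii) for all $1\le i<j\le D$, $$\alpha^*_i\alpha^*_jB-\alpha^*_iB\alpha^*_j-\alpha^*_jB\alpha^*_i+B\alpha^*_i\alpha^*_j=0.$$
   Context: $Q_D$ is the graph with vertex set $X=\{0,1\}^D$ (sequences $x=(x_1,\ldots,x_D)$), two vertices adjacent iff they differ in exactly one coordinate. For $1\le i\le D$, $\alpha^*_i$ is the diagonal matrix with $(x,x)$-entry $1$ if $x_i=0$ and $-1$ if $x_i=1$. *)

(* Defs.v *)
From HB Require Import structures.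
From mathcomp Require Import all_boot all_order all_algebra.
Set Implicit Arguments. Unset Strict Implicit. Unset Printing Implicit Defensive.
Import Order.TTheory GRing.Theory Num.Theory.
Local Open Scope ring_scope.

(* Vertex set X = {0,1}^D : functions from coordinates 'I_D (0-based) to bool
   (false = 0, true = 1). *)
Definition cube (D : nat) := {ffun 'I_D -> bool}.

Definition hdist (D : nat) (x y : cube D) : nat := #|[set k | x k != y k]|.
Definition cube_adj (D : nat) (x y : cube D) : bool := hdist x y == 1%N.

Definition cmx (R : Type) (D : nat) := cube D -> cube D -> R.

Definition cmul (R : realFieldType) (D : nat) (A B : cmx R D) : cmx R D :=
  fun x y => \sum_(z : cube D) A x z * B z y.

Definition alpha_star (R : realFieldType) (D : nat) (i : 'I_D) : cmx R D :=
  fun x y => if x == y then (if x i then -1 else 1) else 0.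

(* Main.v *)
Require Import Defs.
From HB Require Import structures.
From mathcomp Require Import all_boot all_order all_algebra.
From mathcomp Require Import ring.
Import Order.TTheory GRing.Theory Num.Theory.
Local Open Scope ring_scope.

Definition sg (R : realFieldType) {D : nat} (x : cube D) (i : 'I_D) : R :=
  if x i then -1 else 1.

Lemma cmul_dl (R : realFieldType) D (M A : cmx R D) (d : cube D -> R) x y :
  (forall x y, M x y = if x == y then d x else 0) ->
  cmul M A x y = d x * A x y.
Proof.
move=> HM; rewrite /cmul (bigD1 x) //= big1 ?addr0; first by rewrite HM eqxx.
by move=> z /negbTE zx; rewrite HM eq_sym zx mul0r.
Qed.

Lemma cmul_dr (R : realFieldType) D (M A : cmx R D) (d : cube D -> R) x y :
  (forall x y, M x y = if x == y then d x else 0) ->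
  cmul A M x y = A x y * d y.
Proof.
move=> HM; rewrite /cmul (bigD1 y) //= big1 ?addr0; first by rewrite HM eqxx.
by move=> z /negbTE zx; rewrite HM zx mulr0.
Qed.

Arguments cmul_dl {R D M A d x y}.
Arguments cmul_dr {R D M A d x y}.

Lemma al_d (R : realFieldType) D (i : 'I_D) x y :
  alpha_star R i x y = if x == y then sg R x i else 0.
Proof. by []. Qed.

Lemma al2_d (R : realFieldType) D (i j : 'I_D) x y :
  cmul (alpha_star R i) (alpha_star R j) x y =
  if x == y then sg R x i * sg R x j else 0.
Proof.
rewrite (cmul_dl (al_d R D i)) /alpha_star.
by case: eqP => [->|]; rewrite ?mulr0.
Qed.

Lemma expr_eq (R : realFieldType) D (i j : 'I_D) (B : cmx R D) x y :
  cmul (cmul (alpha_star R i) (alpha_star R j)) B x y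
  - cmul (cmul (alpha_star R i) B) (alpha_star R j) x y
  - cmul (cmul (alpha_star R j) B) (alpha_star R i) x y
  + cmul B (cmul (alpha_star R i) (alpha_star R j)) x y
  = B x y * ((sg R x i - sg R y i) * (sg R x j - sg R y j)).
Proof.
rewrite (cmul_dl (al2_d R D i j)) (cmul_dr (al2_d R D i j)).
rewrite !(cmul_dr (al_d R D _)) !(cmul_dl (al_d R D _)).
rewrite /sg; case: (x i); case: (x j); case: (y i); case: (y j);
  rewrite ?mulrN ?mulNr ?opprK ?mul1r ?mulr1; ring.
Qed.

Lemma sg_diff (R : realFieldType) D (x y : cube D) i :
  (sg R x i - sg R y i == 0) = (x i == y i).
Proof.
have h2 : (1 + 1 : R) != 0 by rewrite -(natrD R 1 1) pnatr_eq0.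
rewrite /sg; case: (x i); case: (y i) => //=; rewrite ?subrr ?eqxx //.
- by rewrite -opprD oppr_eq0 (negbTE h2).
- by rewrite opprK (negbTE h2).
Qed.

Theorem lemma7p2 (R : realFieldType) (D : nat) (hD : (0 < D)%N) (B : cmx R D) :
  (forall x y : cube D, x != y -> ~~ cube_adj x y -> B x y = 0) <->
  (forall i j : 'I_D, (i < j)%N ->
     forall x y : cube D,
       cmul (cmul (alpha_star R i) (alpha_star R j)) B x y
       - cmul (cmul (alpha_star R i) B) (alpha_star R j) x y
       - cmul (cmul (alpha_star R j) B) (alpha_star R i) x y
       + cmul B (cmul (alpha_star R i) (alpha_star R j)) x y = 0).
Proof.
split.
- move=> H i j ij x y; rewrite expr_eq.
  have [xy|xy] := eqVneq x y; first by rewrite xy !subrr mul0r mulr0.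
  have [adj|nadj] := boolP (cube_adj x y); last by rewrite H // mul0r.
  apply/eqP; rewrite !mulf_eq0 !sg_diff.
  case: (boolP (x i == y i)) => [_|xi]; first by rewrite /= ?orbT.
  case: (boolP (x j == y j)) => [_|xj]; first by rewrite /= ?orbT.
  exfalso; move: adj; rewrite /cube_adj /hdist => /eqP E.
  have : (1 < #|[set k | x k != y k]|)%N.
    apply/card_gt1P; exists i, j; rewrite !inE xi xj; split => //.
    by apply/eqP => eij; move: ij; rewrite eij ltnn.
  by rewrite E.
- move=> H x y xy nadj.
  have : (1 < hdist x y)%N.
    move: nadj; rewrite /cube_adj ltn_neqAle eq_sym => -> /=.
    rewrite lt0n cards_eq0; apply/set0Pn.
    have [k xk] : exists k, x k != y k.
      apply/existsP; move: xy; apply: contraR; rewrite negb_exists => /forallP A.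
      by apply/eqP/ffunP => k; apply/eqP; move: (A k); rewrite negbK.
    by exists k; rewrite inE.
  move=> /card_gt1P [i [j [iA jA ij]]]; move: iA jA; rewrite !inE => xi xj.
  have main : forall a b : 'I_D, (a < b)%N -> x a != y a -> x b != y b -> B x y = 0.
    move=> a b ab xa xb; have := H a b ab x y; rewrite expr_eq => /eqP.
    rewrite !mulf_eq0 !sg_diff (negbTE xa) (negbTE xb) orbF orbF => /eqP.
    by [].
  case: (ltngtP i j) => [l|l|e]; first exact: (main i j).
  + exact: (main j i).
  + by move: ij; rewrite (val_inj e) eqxx.
Qed.
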